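(* For any integers $m,n\geq 3$, we have $M_{\mathcal{F}_{c}}(G_{m,n})\leq 16$. Moreover, $M_{\mathcal{F}_{c}}(G_{3,3})=16$.
   Context: For integers $m,n\geq 3$, the $m\times n$ grid $G_{m,n}$ is the graph with vertex set $[m]\times[n]$ in which $(u,v)$ and $(i,j)$ are adjacent if and only if either $u=i$ and $v\equiv j\pm 1 \pmod n$, or $v=j$ and $u\equiv i\pm1 \pmod m$. For two graphs on the same vertex set, their symmetric difference is the graph on that vertex set whose edges are those belonging to exactly one of the two graphs. $M_{\mathcal{F}_{c}}(G_{m,n})$ denotes the maximum possible size of a family $\mathcal{G}$ of spanning subgraphs of $G_{m,n}$ such that the symmetric difference of any two distinct members of $\mathcal{G}$ is connected. *)

(* Defs.v *)
From mathcomp Require Import all_boot.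
Set Implicit Arguments. Unset Strict Implicit. Unset Printing Implicit Defensive.

Definition gvert (m n : nat) : finType := ('I_m * 'I_n)%type.

Definition grid_adj (m n : nat) (u v : gvert m n) : bool :=
  ((u.1 == v.1) && ((nat_of_ord v.2 == (u.2 + 1) %% n) || (nat_of_ord u.2 == (v.2 + 1) %% n)))
  || ((u.2 == v.2) && ((nat_of_ord v.1 == (u.1 + 1) %% m) || (nat_of_ord u.1 == (v.1 + 1) %% m))).

Definition grid_edges (m n : nat) : {set {set gvert m n}} :=
  [set e : {set gvert m n} | [exists u, exists v, grid_adj u v && (e == [set u; v])]].

(* A spanning subgraph of G_{m,n} is given by its edge set, a subset of the
   edges of G_{m,n} (vertex set is always all of [m] x [n]). *)
Definition spanning_sub (m n : nat) (H : {set {set gvert m n}}) : bool :=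
  H \subset grid_edges m n.

Definition symdiff (T : finType) (H1 H2 : {set {set T}}) : {set {set T}} :=
  (H1 :\: H2) :|: (H2 :\: H1).

Definition connected_graph (T : finType) (S : {set {set T}}) : Prop :=
  forall u v : T, connect (fun x y => [set x; y] \in S) u v.

Definition conn_family (m n : nat) (F : {set {set {set gvert m n}}}) : Prop :=
  (forall H, H \in F -> spanning_sub H) /\
  (forall H1 H2, H1 \in F -> H2 \in F -> H1 != H2 -> connected_graph (symdiff H1 H2)).

Definition is_MFc (m n k : nat) : Prop :=
  (exists F : {set {set {set gvert m n}}}, conn_family F /\ #|F| = k) /\
  (forall F : {set {set {set gvert m n}}}, conn_family F -> #|F| <= k).

(* Main.v *)
Require Import Defs.
From mathcomp Require Import all_boot zify.
Set Implicit Arguments. Unset Strict Implicit. Unset Printing Implicit Defensive.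

Definition labh (x : gvert 3 3) : nat :=
  nth 0 [:: 7; 13; 1; 9; 2; 15; 6; 2; 4] (3 * x.1 + x.2).
Definition labv (x : gvert 3 3) : nat :=
  nth 0 [:: 10; 8; 6; 11; 13; 5; 3; 12; 14] (3 * x.1 + x.2).
Definition lab (x y : gvert 3 3) : nat :=
  if x.1 == y.1 then (if nat_of_ord y.2 == (x.2 + 1) %% 3 then labh x else labh y)
  else (if nat_of_ord y.1 == (x.1 + 1) %% 3 then labv x else labv y).
Definition bit k n := odd (n %/ 2 ^ k).
Definition dot (s l : nat) := (bit 0 s && bit 0 l) (+) (bit 1 s && bit 1 l) (+) (bit 2 s && bit 2 l) (+) (bit 3 s && bit 3 l).
Definition cc (s : 'I_16) (x y : gvert 3 3) : bool := grid_adj x y && dot s (lab x y).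

Definition o3 (k : nat) : 'I_3 := @Ordinal 3 (k %% 3) (@ltn_pmod k 3 isT).
Definition o16 (k : nat) : 'I_16 := @Ordinal 16 (k %% 16) (@ltn_pmod k 16 isT).
Definition S16 : seq 'I_16 := map o16 (iota 0 16).
Definition V (i : nat) : gvert 3 3 := (o3 (i %/ 3), o3 i).
Definition adjm (R : rel (gvert 3 3)) := [seq [seq R (V i) (V j) | j <- iota 0 9] | i <- iota 0 9].
Definition stepN (A : seq (seq bool)) (seen : seq nat) :=
  seen ++ [seq j <- iota 0 9 | (j \notin seen) && has (fun i => nth false (nth [::] A i) j) seen].
Fixpoint reachN A k seen := if k is k'.+1 then reachN A k' (stepN A seen) else seen.
Definition allconn (R : rel (gvert 3 3)) := let A := adjm R in all (fun j => j \in reachN A 8 [:: 0]) (iota 0 9).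
Definition ccR (s t : 'I_16) := fun x y => cc s x y != cc t x y.
Definition bigcheck := all (fun s => all (fun t => (s == t) || allconn (ccR s t)) S16) S16.
Definition symcheck := all (fun s => all (fun i => all (fun j => cc s (V i) (V j) == cc s (V j) (V i)) (iota 0 9)) (iota 0 9)) S16.
Lemma bigcheckT : bigcheck.
Proof. vm_compute. exact isT. Qed.
Lemma symcheckT : symcheck.
Proof. vm_compute. exact isT. Qed.

Lemma set2_eqP (T : finType) (x y u v : T) :
  [set x; y] = [set u; v] -> (x = u /\ y = v) \/ (x = v /\ y = u).
Proof.
move=> H.
have hx : x \in [set u; v] by rewrite -H set21.
have hy : y \in [set u; v] by rewrite -H set22.
have hu : u \in [set x; y] by rewrite H set21.
have hv : v \in [set x; y] by rewrite H set22.
move: hx hy hu hv; rewrite !inE.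
case/orP=> /eqP hx; case/orP=> /eqP hy; subst => hu hv.
all: try by [left|right].
- rewrite orbb in hv; move/eqP: hv => ->; by left.
- rewrite orbb in hu; move/eqP: hu => ->; by right.
Qed.

Lemma connect_first (T : finType) (R : rel T) x y :
  connect R x y -> x != y -> exists a, R x a.
Proof.
case/connectP=> [[|a p]] /= Hp Hl; first by rewrite Hl eqxx.
by move=> _; exists a; case/andP: Hp.
Qed.

Definition Hs (s : 'I_16) : {set {set gvert 3 3}} :=
  [set e : {set gvert 3 3} | [exists u, exists v, (e == [set u; v]) && cc s u v]].

Lemma V_surj (x : gvert 3 3) : exists2 i, i < 9 & x = V i.
Proof.
case: x => [[a Ha] [b Hb]].
exists (3 * a + b); first by case: a Ha => [|[|[|]]] //; case: b Hb => [|[|[|]]].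
rewrite /V /o3; congr pair; apply: val_inj => /=.
  by case: a Ha => [|[|[|]]] //; case: b Hb => [|[|[|]]].
by case: a Ha => [|[|[|]]] //; case: b Hb => [|[|[|]]].
Qed.

Lemma S16_all (s : 'I_16) : s \in S16.
Proof.
case: s => k Hk; apply/mapP; exists k; first by rewrite mem_iota.
by apply: val_inj => /=; rewrite modn_small.
Qed.

Lemma cc_sym s : symmetric (cc s).
Proof.
move=> x y; have/allP/(_ s (S16_all s)) := symcheckT.
case: (V_surj x) => i Hi ->; case: (V_surj y) => j Hj ->.
move/allP/(_ i); rewrite mem_iota Hi => /(_ isT)/allP/(_ j); rewrite mem_iota Hj.
by move/(_ isT)/eqP.
Qed.

Lemma mem_Hs s x y : ([set x; y] \in Hs s) = cc s x y.
Proof.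
rewrite inE; apply/existsP/idP.
  case=> u /existsP [v /andP [/eqP /set2_eqP [[-> ->]|[-> ->]] H]] //.
  by rewrite cc_sym.
by move=> H; exists x; apply/existsP; exists y; rewrite eqxx H.
Qed.

Lemma reachN_sound (R : rel (gvert 3 3)) k seen :
  (forall i, i \in seen -> connect R (V 0) (V i)) ->
  forall j, j \in reachN (adjm R) k seen -> connect R (V 0) (V j).
Proof.
elim: k seen => [|k IH] seen Hs0 //=.
apply: IH => j; rewrite mem_cat => /orP [/Hs0 //|].
rewrite mem_filter => /andP [/andP [_ /hasP [i Hi Hij]] _].
apply: connect_trans (Hs0 i Hi) _; apply: connect1.
move: Hij; rewrite /adjm.
case: (ltnP i 9) => Hi9; last by rewrite [nth [::] _ _]nth_default ?size_map ?size_iota // nth_nil.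
rewrite (nth_map 0) ?size_iota // nth_iota //.
case: (ltnP j 9) => Hj9; last by rewrite nth_default // size_map size_iota.
by rewrite (nth_map 0) ?size_iota // nth_iota.
Qed.

Lemma allconnP (R : rel (gvert 3 3)) : symmetric R -> allconn R ->
  forall u v, connect R u v.
Proof.
move=> Hsym /allP Ha.
have H0 : forall x, connect R (V 0) x.
  move=> x; case: (V_surj x) => j Hj ->.
  apply: (@reachN_sound R 8 [:: 0]); last by apply: Ha; rewrite mem_iota.
  by move=> i; rewrite inE => /eqP ->.
move=> u v; apply: connect_trans (H0 v).
by rewrite (sym_connect_sym Hsym).
Qed.

Lemma Hs_sub s : spanning_sub (Hs s).
Proof.
apply/subsetP=> e; rewrite inE => /existsP [u /existsP [v /andP [He /andP [Ha _]]]].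
by rewrite inE; apply/existsP; exists u; apply/existsP; exists v; rewrite Ha He.
Qed.

Lemma symdiff_Hs s t x y : ([set x; y] \in symdiff (Hs s) (Hs t)) = ccR s t x y.
Proof.
rewrite /symdiff in_setU !in_setD !mem_Hs /ccR.
by case: (cc s x y); case: (cc t x y).
Qed.

Lemma conn_st s t : s != t -> forall u v, connect (ccR s t) u v.
Proof.
move=> st; apply: allconnP.
  by move=> x y; rewrite /ccR cc_sym (cc_sym t).
have/allP/(_ s (S16_all s))/allP/(_ t (S16_all t)) := bigcheckT.
by rewrite (negbTE st).
Qed.

Lemma Hs_inj : injective Hs.
Proof.
move=> s t Hst; apply/eqP; apply/negP => /negP st.
have [a Ha] := connect_first (conn_st st (V 0) (V 1)) isT.
move: Ha; rewrite /ccR -!mem_Hs Hst.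
by rewrite eqxx.
Qed.

Lemma part2_family : exists F : {set {set {set gvert 3 3}}}, conn_family F /\ #|F| = 16.
Proof.
exists (Hs @: [set: 'I_16]); split; last by rewrite card_imset ?cardsT ?card_ord //; exact: Hs_inj.
split.
  by move=> H /imsetP [s _ ->]; exact: Hs_sub.
move=> H1 H2 /imsetP [s _ ->] /imsetP [t _ ->] Hne u v.
have st : s != t by apply: contraNneq Hne => ->.
rewrite (@eq_connect _ _ (ccR s t)); first exact: conn_st.
by move=> x y; rewrite symdiff_Hs.
Qed.

Section P1.
Variables m n : nat.
Local Notation T := (gvert m.+3 n.+3).
Definition v0 : T := (ord0, ord0).
Definition N4 : {set T} := [set (ord0, inord 1); (ord0, ord_max); (inord 1, ord0); (ord_max, ord0)].
Definition star : {set {set T}} := [set e in grid_edges m.+3 n.+3 | v0 \in e].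

Lemma nbr w : grid_adj v0 w || grid_adj w v0 -> w \in N4.
Proof.
case: w => [[a Ha] [b Hb]]; rewrite /grid_adj /v0 /N4 !inE /=.
rewrite !xpair_eqE -!val_eqE /= !inordK //.
case: a Ha => [|[|a]] Ha; case: b Hb => [|[|b]] Hb //=; rewrite ?orbF ?andbF ?orbT //=.
- rewrite orbb addn1; case: (ltnP b.+3 n.+3) => Hl; first by rewrite modn_small.
  have -> : b.+3 = n.+3 by lia.
  by rewrite modnn => _; apply/eqP; lia.
- rewrite orbb eqxx andbT addn1; case: (ltnP a.+3 m.+3) => Hl; first by rewrite modn_small.
  have -> : a.+3 = m.+3 by lia.
  by rewrite modnn => _; apply/eqP; lia.
Qed.

Lemma star_card : #|star| <= 4.
Proof.
have sub : star \subset [set [set v0; w] | w in N4].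
  apply/subsetP => e; rewrite inE => /andP [He Hv].
  move: He; rewrite inE => /existsP [u /existsP [v /andP [Ha /eqP De]]].
  move: Hv; rewrite De !inE => /orP [/eqP Hu| /eqP Hv].
    subst u; apply/imsetP; exists v => //; apply: nbr; by rewrite Ha.
  subst v; apply/imsetP; exists u; last by rewrite setUC.
  by apply: nbr; rewrite Ha orbT.
apply: leq_trans (subset_leq_card sub) _.
apply: leq_trans (leq_imset_card _ _) _.
have sub2 : N4 \subset [:: (ord0, inord 1); (ord0, ord_max); (inord 1, ord0); (ord_max, ord0) : T].
  by apply/subsetP => x; rewrite !inE -!orbA.
by apply: leq_trans (subset_leq_card sub2) (card_size _).
Qed.

Lemma part1_aux (F : {set {set {set T}}}) : conn_family F -> #|F| <= 16.
Proof.
case=> Hsp Hc.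
pose phi := fun H : {set {set T}} => H :&: star.
have inj : {in F &, injective phi}.
  move=> H1 H2 h1 h2 Heq; apply/eqP; apply/negP => /negP ne.
  have hne : v0 != (ord0, inord 1) by rewrite /v0 xpair_eqE eqxx /= -val_eqE /= inordK.
  have [a Ha] := connect_first (Hc _ _ h1 h2 ne v0 (ord0, inord 1)) hne.
  have Hg : [set v0; a] \in grid_edges m.+3 n.+3.
    move: Ha; rewrite /symdiff in_setU !in_setD => /orP [/andP [_ i1]|/andP [_ i2]].
      exact: (subsetP (Hsp _ h1)).
    exact: (subsetP (Hsp _ h2)).
  have Hst : [set v0; a] \in star by rewrite inE Hg set21.
  move: Ha; rewrite /symdiff in_setU !in_setD => /orP [/andP [n2 i1]|/andP [n1 i2]].
    have : [set v0; a] \in phi H1 by rewrite inE i1 Hst.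
    by rewrite Heq inE => /andP [i2 _]; rewrite i2 in n2.
  have : [set v0; a] \in phi H2 by rewrite inE i2 Hst.
  by rewrite -Heq inE => /andP [i1 _]; rewrite i1 in n1.
rewrite -(card_in_imset inj).
apply: (@leq_trans #|powerset star|).
  apply: subset_leq_card; apply/subsetP => X /imsetP [H _ ->].
  by rewrite powersetE subsetIr.
rewrite card_powerset; apply: leq_trans (leq_pexp2l _ star_card) _ => //.
Qed.
End P1.

Lemma part1 (m n : nat) : 3 <= m -> 3 <= n ->
  forall F : {set {set {set gvert m n}}}, conn_family F -> #|F| <= 16.
Proof.
case: m => [|[|[|m]]] // _; case: n => [|[|[|n]]] // _.
exact: part1_aux.
Qed.



Theorem proposition1p7 :
  (forall (m n : nat), 3 <= m -> 3 <= n ->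
     forall F : {set {set {set gvert m n}}}, conn_family F -> #|F| <= 16)
  /\ is_MFc 3 3 16.
Proof.
split; first exact: part1.
split; first exact: part2_family.
exact: (@part1 3 3 isT isT).
Qed.
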